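(* Let $d \ge 2$ and let $v_1,\ldots,v_m \in \mathbb{R}^d$ with $m \ge d$. Let $M$ be the minimum covering sphere of $\{v_1,\ldots,v_m\}$. Let $p_1, p_2 \in \mathbb{R}^d$ be two points lying outside $M$ (i.e. outside the closed ball bounded by $M$) such that the segment $\overline{p_1p_2}$ intersects the convex hull $\operatorname{conv}(\{v_1,\ldots,v_m\})$. Assume the point set $\{v_1,\ldots,v_m,p_1,p_2\}$ is in general position. Then there is no witness sphere of the segment $\overline{p_1p_2}$ with respect to the point set $\{v_1,\ldots,v_m,p_1,p_2\}$; that is, there is no sphere $W \subset \mathbb{R}^d$ with $p_1,p_2 \in W$ whose open interior contains none of the points $v_1,\ldots,v_m$.
   Context: The minimum covering sphere of a non-empty finite set $\{v_1,\ldots,v_m\}\subset\mathbb{R}^d$ is the smallest sphere such that every $v_i$ lies inside it or on it. A witness sphere of a segment (or, more generally, of a simplex) with respect to a finite point set $P$ is a sphere that contains all vertices of the segment on its boundary and contains no point of $P$ in its interior. A finite point set in $\mathbb{R}^d$ is in general position if for each $i=1,\ldots,d$ no $i+1$ of its points lie in an affine subspace of dimension $i-1$, and no $d+2$ of its points lie on a common sphere. *)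

(* Defs.v *)
From HB Require Import structures.
From mathcomp Require Import all_boot all_order all_algebra.
From mathcomp Require Import reals.
Set Implicit Arguments. Unset Strict Implicit. Unset Printing Implicit Defensive.
Import Order.TTheory GRing.Theory Num.Theory.
Local Open Scope ring_scope.

Section Geometry.
Variables (R : realType) (d : nat).
Local Notation pt := 'rV[R]_d.

Definition sqdist (x y : pt) : R := \sum_(k < d) (x ord0 k - y ord0 k) ^+ 2.

Definition covers (m : nat) (v : 'I_m -> pt) (c : pt) (r : R) : Prop :=
  0 <= r /\ forall i, sqdist (v i) c <= r ^+ 2.

Definition min_covering_sphere (m : nat) (v : 'I_m -> pt) (c : pt) (r : R) : Prop :=
  covers v c r /\ forall c' r', covers v c' r' -> r <= r'.

Definition in_affine_subspace (s : seq pt) (k : nat) : Prop :=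
  exists (o : pt) (B : 'M[R]_(k, d)),
    forall x, x \in s -> exists c : 'rV[R]_k, x = o + c *m B.

Definition on_common_sphere (s : seq pt) : Prop :=
  exists (w : pt) (rr : R), 0 < rr /\ forall x, x \in s -> sqdist x w = rr.

Definition general_position (A : pt -> Prop) : Prop :=
  (forall (i : nat) (s : seq pt), (1 <= i <= d)%N -> uniq s ->
     size s = i.+1 -> (forall x, x \in s -> A x) ->
     ~ in_affine_subspace s i.-1) /\
  (forall s : seq pt, uniq s -> size s = d.+2 -> (forall x, x \in s -> A x) ->
     ~ on_common_sphere s).

Definition segment_meets_hull (m : nat) (v : 'I_m -> pt) (p1 p2 : pt) : Prop :=
  exists t : R, 0 <= t <= 1 /\
  exists lam : 'I_m -> R, (forall i, 0 <= lam i) /\ \sum_i lam i = 1 /\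
    (1 - t) *: p1 + t *: p2 = \sum_i lam i *: v i.

Definition witness_sphere (P : pt -> Prop) (p1 p2 : pt) (w : pt) (rho : R) : Prop :=
  0 < rho /\ sqdist p1 w = rho ^+ 2 /\ sqdist p2 w = rho ^+ 2 /\
  forall x, P x -> ~ (sqdist x w < rho ^+ 2).

End Geometry.

(* Main.v *)
Require Import Defs.
From HB Require Import structures.
From mathcomp Require Import all_boot all_order all_algebra.
From mathcomp Require Import reals.
From mathcomp Require Import ring lra.
Import Order.TTheory GRing.Theory Num.Theory.
Local Open Scope ring_scope.

Definition Lf {R : realType} {d : nat} (a : 'I_d -> R) (x : 'rV[R]_d) : R := \sum_k x ord0 k * a k.

Section Aux.
Variables (R : realType) (d : nat).
Local Notation pt := 'rV[R]_d.

Lemma Hform (x w c : pt) : sqdist x w - sqdist x c =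
  Lf (fun k => 2 * (c ord0 k - w ord0 k)) x +
  \sum_k (w ord0 k ^+ 2 - c ord0 k ^+ 2).
Proof. rewrite /sqdist /Lf -sumrB -big_split; apply: eq_bigr => k _ /=; ring. Qed.

Lemma Lf2 a (x y : pt) (s t : R) : Lf a (s *: x + t *: y) = s * Lf a x + t * Lf a y.
Proof.
rewrite /Lf !mulr_sumr -big_split; apply: eq_bigr => k _ /=; rewrite !mxE; ring.
Qed.

Lemma LfS a (m : nat) (lam : 'I_m -> R) (v : 'I_m -> pt) :
  Lf a (\sum_i lam i *: v i) = \sum_i lam i * Lf a (v i).
Proof.
rewrite /Lf; under eq_bigr do rewrite summxE mulr_suml.
rewrite exchange_big; apply: eq_bigr => i _ /=; rewrite mulr_sumr.
by apply: eq_bigr => k _; rewrite mxE mulrA.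
Qed.
End Aux.

Theorem mainTheorem1 (R : realType) (d m : nat) (v : 'I_m -> 'rV[R]_d)
  (c : 'rV[R]_d) (r : R) (p1 p2 : 'rV[R]_d) :
  (2 <= d)%N -> (d <= m)%N ->
  min_covering_sphere v c r ->
  r ^+ 2 < sqdist p1 c -> r ^+ 2 < sqdist p2 c ->
  segment_meets_hull v p1 p2 ->
  general_position (fun x => (exists i, x = v i) \/ x = p1 \/ x = p2) ->
  ~ exists (w : 'rV[R]_d) (rho : R),
      witness_sphere (fun x => (exists i, x = v i) \/ x = p1 \/ x = p2) p1 p2 w rho.
Proof.
move=> _ _ [[_ cov] _] h1 h2 [t [/andP[t0 t1] [lam [l0 [l1 eq]]]]] _.
move=> [w [rho [_ [e1 [e2 nin]]]]].
set a := (fun k => 2 * (c ord0 k - w ord0 k)).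
set K := \sum_k (w ord0 k ^+ 2 - c ord0 k ^+ 2).
set D := rho ^+ 2 - r ^+ 2.
have Hv i : D <= Lf a (v i) + K.
  rewrite -Hform /D; apply: lerB; last exact: cov.
  have := nin (v i) (or_introl (ex_intro _ i erefl)).
  by rewrite real_ltNge ?num_real //; move/negP; rewrite negbK.
have Hp1 : Lf a p1 + K < D by rewrite -Hform /D e1; lra.
have Hp2 : Lf a p2 + K < D by rewrite -Hform /D e2; lra.
have E : Lf a ((1 - t) *: p1 + t *: p2) = Lf a (\sum_i lam i *: v i) by rewrite eq.
rewrite Lf2 LfS in E.
have S : D <= \sum_i lam i * Lf a (v i) + K.
  have -> : D = \sum_i lam i * D by rewrite -mulr_suml l1 mul1r.
  have -> : K = \sum_i lam i * K by rewrite -mulr_suml l1 mul1r.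
  rewrite -big_split /=; apply: ler_sum => i _; rewrite -mulrDr.
  by apply: ler_wpM2l; [exact: l0 | exact: Hv].
rewrite -E in S.
set A := Lf a p1 in Hp1 S; set B := Lf a p2 in Hp2 S.
have u1 : 0 <= (1 - t) * (D - (A + K)) by apply: mulr_ge0; lra.
have u2 : 0 <= t * (D - (B + K)) by apply: mulr_ge0; lra.
have [tl|te] := ltrP t 1.
  have : 0 < (1 - t) * (D - (A + K)) by apply: mulr_gt0; lra.
  lra.
have t1e : t = 1 by lra.
have E2 : (1 - t) * A + t * B = B by rewrite t1e; ring.
rewrite E2 in S.
lra.
Qed.
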